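(* Let $n$ be odd. Then $|RELS(n)|\neq|ROLS(n)|$ if and only if $$\sum_{0\le k,m<n/2}(-1)^{k+m}(n-2k)(n-2m)N_n(k,m)\neq0,$$ where $N_n(k,m)$ is the number of reduced Latin squares of order $n$ of parity type $(k,m)$.
   Context: A Latin square of order $n$ is an $n\times n$ array with entries in $[n]$, each symbol once in each row and column. Rows and columns are viewed as permutations: if symbol $i$ appears in the $j$th place of a row (column) $\sigma$, then $\sigma(i)=j$. $L$ is reduced if its first row and first column are the identity permutation. $\mathrm{par}(L)$ is the product of the signs of all rows and columns; $L$ is even if $\mathrm{par}(L)=1$ and odd if $\mathrm{par}(L)=-1$. $RELS(n)$ and $ROLS(n)$ denote the sets of even and odd reduced Latin squares of order $n$. The parity type of $L$ is $(k,m)$, $0\le k,m\le n/2$, if $k$ of its rows have one sign and the other $n-k$ rows the opposite sign, and $m$ of its columns have one sign and the other $n-m$ columns the opposite sign. *)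

(* Defs.v *)
From mathcomp Require Import all_boot all_order all_algebra all_fingroup.
Set Implicit Arguments. Unset Strict Implicit. Unset Printing Implicit Defensive.
Import GRing.Theory.

Definition array (n : nat) := 'M['I_n]_n.

Definition latin n (L : array n) : bool :=
  [forall r : 'I_n, forall s : 'I_n, #|[set j | L r j == s]| == 1%N] &&
  [forall c : 'I_n, forall s : 'I_n, #|[set i | L i c == s]| == 1%N].

Definition reduced n (L : array n) : bool :=
  [forall i : 'I_n, forall j : 'I_n, (val i == 0%N) ==> (L i j == j)] &&
  [forall i : 'I_n, forall j : 'I_n, (val j == 0%N) ==> (L i j == i)].

Definition row_sigma n (L : array n) (r : 'I_n) : option 'S_n :=
  [pick s : 'S_n | [forall j, s (L r j) == j]].
Definition col_sigma n (L : array n) (c : 'I_n) : option 'S_n :=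
  [pick s : 'S_n | [forall i, s (L i c) == i]].

(* sign of a permutation as an integer (+1 / -1); 1 for non-permutations
   (never occurs for Latin squares). *)
Definition osign n (o : option 'S_n) : int :=
  if o is Some s then ((-1) ^+ odd_perm s)%R else 1%R.

Definition par n (L : array n) : int :=
  ((\prod_(r : 'I_n) osign (row_sigma L r)) * (\prod_(c : 'I_n) osign (col_sigma L c)))%R.

Definition RELS n : {set array n} :=
  [set L : array n | latin L && reduced L && (par L == 1%R)].
Definition ROLS n : {set array n} :=
  [set L : array n | latin L && reduced L && (par L == (-1)%R)].

Definition n_odd_rows n (L : array n) : nat :=
  #|[set r : 'I_n | osign (row_sigma L r) == (-1)%R]|.
Definition n_odd_cols n (L : array n) : nat :=
  #|[set c : 'I_n | osign (col_sigma L c) == (-1)%R]|.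

Definition parity_type n (L : array n) (k m : nat) : bool :=
  [&& k.*2 <= n, m.*2 <= n,
      (n_odd_rows L == k) || (n_odd_rows L == n - k) &
      (n_odd_cols L == m) || (n_odd_cols L == n - m)].

Definition N n (k m : nat) : nat :=
  #|[set L : array n | latin L && reduced L && parity_type L k m]|.

(* Main.v *)
Require Import Defs.
From mathcomp Require Import all_boot all_order all_algebra all_fingroup.
From mathcomp Require Import ring zify.
Set Implicit Arguments. Unset Strict Implicit. Unset Printing Implicit Defensive.
Import GRing.Theory Num.Theory.
Local Open Scope ring_scope.

Section S.
Variable n : nat.
Local Notation m := n.+1.
Implicit Types L R : array m.

Definition sg (s : 'S_m) : int := (-1) ^+ odd_perm s.
Definition rs L r := osign (row_sigma L r).
Definition cs L c := osign (col_sigma L c).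

Lemma row_sigmaE L r (s : 'S_m) : (forall j, L r j = s j) -> rs L r = sg s.
Proof.
move=> Hs; rewrite /rs /row_sigma; case: pickP => [s' /forallP H | H].
  have -> : s' = (s^-1)%g.
    apply/permP => x; have := eqP (H ((s^-1)%g x)); rewrite Hs permKV => ->.
    done.
  by rewrite /= /sg odd_permV.
by have := H (s^-1)%g; move/negP; case; apply/forallP => j; rewrite Hs permK.
Qed.

Lemma col_sigmaE L c (s : 'S_m) : (forall i, L i c = s i) -> cs L c = sg s.
Proof.
move=> Hs; rewrite /cs /col_sigma; case: pickP => [s' /forallP H | H].
  have -> : s' = (s^-1)%g.
    apply/permP => x; have := eqP (H ((s^-1)%g x)); rewrite Hs permKV => ->.
    done.
  by rewrite /= /sg odd_permV.
by have := H (s^-1)%g; move/negP; case; apply/forallP => j; rewrite Hs permK.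
Qed.

Lemma inj_card1 (f : 'I_m -> 'I_m) : injective f -> forall s, #|[set j | f j == s]| = 1%N.
Proof.
move=> fi s.
have [j0 Hj0] : exists j0, f j0 = s.
  have : s \in codom f by rewrite (inj_card_onto fi) ?card_ord.
  by case/codomP => x ->; exists x.
have -> : [set j | f j == s] = [set j0].
  by apply/setP => j; rewrite !inE -Hj0; apply/eqP/eqP => [/fi|->].
by rewrite cards1.
Qed.

Lemma card1_inj (f : 'I_m -> 'I_m) : (forall s, #|[set j | f j == s]| = 1%N) -> injective f.
Proof.
move=> H a b Hab; have /eqP/cards1P [x Hx] := H (f a).
have : a \in [set j | f j == f a] by rewrite inE.
have : b \in [set j | f j == f a] by rewrite inE Hab.
by rewrite Hx !inE => /eqP -> /eqP ->.
Qed.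

Lemma latinP L : latin L <-> (forall r, injective (L r)) /\ (forall c, injective (fun i => L i c)).
Proof.
split.
  case/andP => /forallP H1 /forallP H2; split.
    by move=> r; apply: card1_inj => s; apply/eqP; move/forallP: (H1 r); apply.
  by move=> c; apply: card1_inj => s; apply/eqP; move/forallP: (H2 c); apply.
case=> H1 H2; apply/andP; split; apply/forallP => x; apply/forallP => s; apply/eqP.
  exact: (inj_card1 (H1 x)).
exact: (inj_card1 (H2 x)).
Qed.

Lemma reducedP L : reduced L <-> (forall j, L ord0 j = j) /\ (forall i, L i ord0 = i).
Proof.
split.
  case/andP => /forallP H1 /forallP H2; split.
    by move=> j; move/forallP: (H1 ord0) => /(_ j) /implyP /(_ isT) /eqP.
  by move=> i; move/forallP: (H2 i) => /(_ ord0) /implyP /(_ isT) /eqP.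
case=> H1 H2; apply/andP; split; apply/forallP => i; apply/forallP => j; apply/implyP => /eqP H.
  have -> : i = ord0 by apply: val_inj.
  by rewrite H1.
have -> : j = ord0 by apply: val_inj.
by rewrite H2.
Qed.


Definition iso (g a b : 'S_m) L : array m := \matrix_(i, j) g (L (a i) (b j)).

Lemma isoE g a b L i j : iso g a b L i j = g (L (a i) (b j)).
Proof. by rewrite mxE. Qed.

Lemma latin_iso g a b L : latin L -> latin (iso g a b L).
Proof.
case/latinP => H1 H2; apply/latinP; split.
  by move=> r x y; rewrite !isoE => /perm_inj /(H1 (a r)) /perm_inj.
by move=> c x y; rewrite !isoE => /perm_inj /(H2 (b c)) /perm_inj.
Qed.

Lemma iso_inv g a b L : iso g^-1%g a^-1%g b^-1%g (iso g a b L) = L.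
Proof. by apply/matrixP => i j; rewrite !isoE !permKV permK. Qed.

Lemma latin_isoE g a b L : latin (iso g a b L) = latin L.
Proof.
apply/idP/idP; last exact: latin_iso.
by move/(latin_iso g^-1%g a^-1%g b^-1%g); rewrite iso_inv.
Qed.

Lemma iso_inj g a b : injective (iso g a b).
Proof. exact: (can_inj (iso_inv g a b)). Qed.

Lemma sgM s t : sg (s * t)%g = sg s * sg t.
Proof. by rewrite /sg odd_permM signr_addb. Qed.

Lemma rs_iso g a b L r : latin L -> rs (iso g a b L) r = sg g * rs L (a r) * sg b.
Proof.
case/latinP => H1 _.
set rho := perm (H1 (a r)).
rewrite (@row_sigmaE L (a r) rho); last by move=> j; rewrite permE.
rewrite (@row_sigmaE _ r (b * rho * g)%g); last by move=> j; rewrite isoE !permM permE.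
by rewrite !sgM; ring.
Qed.

Lemma cs_iso g a b L c : latin L -> cs (iso g a b L) c = sg g * sg a * cs L (b c).
Proof.
case/latinP => _ H2.
set k := perm (H2 (b c)).
rewrite (@col_sigmaE L (b c) k); last by move=> j; rewrite permE.
rewrite (@col_sigmaE _ c (a * k * g)%g); last by move=> j; rewrite isoE !permM permE.
by rewrite !sgM; ring.
Qed.

Lemma parE L : par L = \prod_r rs L r * \prod_c cs L c.
Proof. by []. Qed.

Hypothesis hm : odd m.

Lemma sgX s : sg s ^+ m = sg s.
Proof. rewrite /sg; case: (odd_perm s); last by rewrite expr1n.
by rewrite expr1 -signr_odd hm. Qed.

Lemma prod_perm (a : 'S_m) (F : 'I_m -> int) : \prod_r F (a r) = \prod_r F r.
Proof. by symmetry; apply: (reindex_inj (@perm_inj _ a)). Qed.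

Lemma sum_perm (a : 'S_m) (F : 'I_m -> int) : \sum_r F (a r) = \sum_r F r.
Proof. by symmetry; apply: (reindex_inj (@perm_inj _ a)). Qed.

Lemma par_iso g a b L : latin L -> par (iso g a b L) = sg a * sg b * par L.
Proof.
move=> HL; rewrite !parE.
under eq_bigr => r _ do rewrite rs_iso //.
under [X in _ * X]eq_bigr => c _ do rewrite cs_iso //.
rewrite !big_split /= !prodr_const !card_ord !sgX prod_perm prod_perm.
rewrite /sg; case: (odd_perm g); case: (odd_perm a); case: (odd_perm b); rewrite /= ?expr1 ?expr0; ring.
Qed.

Definition G i j L := par L * rs L i * cs L j.
Definition W L := par L * (\sum_r rs L r) * (\sum_c cs L c).

Lemma W_G L : W L = \sum_i \sum_j G i j L.
Proof.
rewrite /W [par L * _]mulr_sumr mulr_suml; apply: eq_bigr => i _; rewrite mulr_sumr.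
by apply: eq_bigr => j _.
Qed.

Lemma G_iso g a b i j L : latin L -> G i j (iso g a b L) = G (a i) (b j) L.
Proof.
move=> HL; rewrite /G par_iso // rs_iso // cs_iso //.
rewrite /sg; case: (odd_perm g); case: (odd_perm a); case: (odd_perm b); rewrite /= ?expr1 ?expr0; ring.
Qed.

Lemma W_iso g a b L : latin L -> W (iso g a b L) = W L.
Proof.
move=> HL; rewrite !W_G.
under eq_bigr => i _ do under eq_bigr => j _ do rewrite G_iso //.
rewrite (sum_perm a (fun i => \sum_j G i (b j) L)).
by apply: eq_bigr => i _; rewrite (sum_perm b (fun j => G i j L)).
Qed.

Definition fiso (x : ('S_m * 'S_m) * array m) := iso x.1.1 x.1.2 1 x.2.
Definition Xset := [set x : ('S_m * 'S_m) * array m |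
   (x.1.2 ord0 == ord0) && (latin x.2 && reduced x.2)].

Lemma fiso_inj : {in Xset &, injective fiso}.
Proof.
move=> [[g1 a1] R1] [[g2 a2] R2]; rewrite !inE /= => /andP [/eqP a10 /andP [_ /reducedP [r10 c10]]].
move=> /andP [/eqP a20 /andP [_ /reducedP [r20 c20]]].
rewrite /fiso /= => /matrixP E.
have E' : forall i j, g1 (R1 (a1 i) j) = g2 (R2 (a2 i) j).
  by move=> i j; have := E i j; rewrite !isoE !perm1.
have eg : g1 = g2.
  by apply/permP => j; have := E' ord0 j; rewrite a10 a20 r10 r20.
subst g2.
have ea : a1 = a2.
  by apply/permP => i; have := E' i ord0; rewrite c10 c20 => /perm_inj.
subst a2.
have -> : R1 = R2.
  apply/matrixP => i j; have := E' (a1^-1%g i) j; rewrite permKV.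
  exact: perm_inj.
by [].
Qed.

Lemma fiso_im : fiso @: Xset = [set L | latin L].
Proof.
apply/setP => L; rewrite inE; apply/imsetP/idP.
  case=> [[[g a] R]]; rewrite inE /= => /andP [_ /andP [HR _]] ->.
  exact: latin_iso.
move=> HL; have [H1 H2] := latinP L; have [H1' H2'] := H1 HL.
set rho0 := perm (H1' ord0).
set gam := (rho0^-1)%g.
have gamE : forall j, gam (L ord0 j) = j.
  by move=> j; rewrite /gam -[L ord0 j](permE (H1' ord0)) permK.
have kinj : injective (fun i => gam (L i ord0)).
  by move=> x y /perm_inj /H2'.
set kap := perm kinj.
have kap0 : kap ord0 = ord0 by rewrite permE gamE.
have kapV0 : (kap^-1)%g ord0 = ord0.
  by rewrite -{1}kap0 permK.
exists ((gam^-1, kap), iso gam kap^-1 1 L)%g.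
  rewrite inE /= kap0 eqxx latin_iso //=; apply/reducedP; split.
    by move=> j; rewrite isoE kapV0 perm1 gamE.
  move=> i; rewrite isoE perm1; have := permE kinj ((kap^-1)%g i).
  by rewrite -/kap permKV => /esym.
apply/matrixP => i j; rewrite /fiso /= !isoE !perm1 permK.
by rewrite -/kap permK.
Qed.

Lemma decomp (h : array m -> int) :
  (forall (g a : 'S_m) (R : array m), a ord0 = ord0 -> latin R -> reduced R -> h (iso g a 1 R) = h R) ->
  \sum_(L | latin L) h L =
  \sum_(p : 'S_m * 'S_m | p.2 ord0 == ord0) \sum_(R | latin R && reduced R) h R.
Proof.
move=> Hh.
rewrite (pair_big_dep (fun p : 'S_m * 'S_m => p.2 ord0 == ord0)
          (fun _ R => latin R && reduced R) (fun _ R => h R)) /=.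
transitivity (\sum_(x in Xset) h (fiso x)); last first.
  apply: eq_big => [x|x]; first by rewrite inE.
  rewrite inE => /andP [/eqP a0 /andP [HR RR]].
  by rewrite /fiso Hh.
rewrite -(big_imset _ fiso_inj).
by apply: eq_bigl => L; rewrite fiso_im inE.
Qed.

Lemma G00_red R : reduced R -> G ord0 ord0 R = par R.
Proof.
case/reducedP => r0 c0; rewrite /G (@row_sigmaE R ord0 1%g); last by move=> j; rewrite perm1.
rewrite (@col_sigmaE R ord0 1%g); last by move=> j; rewrite perm1.
by rewrite /sg odd_perm1 !mulr1.
Qed.

Lemma sumG i j : \sum_(L | latin L) G i j L = \sum_(L | latin L) G ord0 ord0 L.
Proof.
symmetry; rewrite (reindex_inj (@iso_inj 1%g (tperm ord0 i) (tperm ord0 j))).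
apply: eq_big => L; first by rewrite latin_isoE.
by rewrite latin_isoE => HL; rewrite G_iso // !tpermL.
Qed.

Lemma cancel_sum (T : finType) (P : pred T) (x y k : int) :
  (exists t, P t) -> \sum_(p | P p) x = k * \sum_(p | P p) y -> x = k * y.
Proof.
case=> t Pt; rewrite !sumr_const mulrnAr => e.
have hc : (#|P|%:R : int) != 0 by rewrite pnatr_eq0 -lt0n; apply/card_gt0P; exists t.
by apply: (mulIf hc); rewrite !mulr_natr.
Qed.

Lemma key : \sum_(L : array m | latin L && reduced L) W L =
   (m * m)%:R * \sum_(L : array m | latin L && reduced L) par L.
Proof.
have e1 := decomp (h := W) (fun g a R _ HR _ => W_iso g a 1 HR).
have e2 : \sum_(L | latin L) G ord0 ord0 L = \sum_(p : 'S_m * 'S_m | p.2 ord0 == ord0)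
      \sum_(R | latin R && reduced R) G ord0 ord0 R.
  by apply: decomp => g a R a0 HR _; rewrite G_iso // a0 perm1.
have e3 : \sum_(L | latin L) W L = (m * m)%:R * \sum_(L | latin L) G ord0 ord0 L.
  under eq_bigr => L _ do rewrite W_G.
  rewrite exchange_big; under eq_bigr => i _ do rewrite exchange_big.
  under eq_bigr => i _ do under eq_bigr => j _ do rewrite sumG.
  by rewrite !sumr_const !card_ord -mulrnA mulr_natl.
rewrite e1 e2 in e3.
under [X in _ = _ * X]eq_bigr => R /andP [_ RR] do rewrite -G00_red //.
apply: (cancel_sum _ e3); exists (1%g, 1%g); by rewrite /= perm1.
Qed.

Lemma osign_pm (o : option 'S_m) : osign o = 1 \/ osign o = -1.
Proof. by case: o => [s|] /=; [case: (odd_perm s); [right|left] | left]. Qed.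

Lemma prod_pm (f : 'I_m -> int) : (forall i, f i = 1 \/ f i = -1) ->
  \prod_i f i = (-1) ^+ #|[set i | f i == -1]|.
Proof.
move=> Hf; rewrite (bigID (fun i => f i == -1)) /=.
rewrite (eq_bigr (fun _ => -1)); last by move=> i; rewrite ?andTb => /eqP.
rewrite [X in _ * X]big1 ?mulr1; last first.
  by move=> i /= Hi; case: (Hf i) => // e; rewrite e eqxx in Hi.
rewrite prodr_const; congr (_ ^+ _); apply: eq_card => i; by rewrite !inE.
Qed.

Lemma sum_pm (f : 'I_m -> int) : (forall i, f i = 1 \/ f i = -1) ->
  \sum_i f i = m%:Z - 2 * (#|[set i | f i == -1]|)%:Z.
Proof.
move=> Hf; rewrite (bigID (fun i => f i == -1)) /=.
rewrite (eq_bigr (fun _ => -1)); last by move=> i; rewrite ?andTb => /eqP.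
rewrite [X in _ + X](eq_bigr (fun _ => 1)); last first.
  by move=> i /= Hi; case: (Hf i) => // e; rewrite e eqxx in Hi.
rewrite !sumr_const.
have := cardC [pred i | f i == -1]; rewrite card_ord.
have -> : #|[set i | f i == -1]| = #|[pred i | f i == -1]|.
  by apply: eq_card => i; rewrite !inE.
set c1 := #|[pred i | f i == -1]|.
rewrite [X in _ + X%:R](_ : _ = #|[predC [pred i | f i == -1]]|); last by apply: eq_card.
set c2 := #|[predC _]| => e.
rewrite mulNrn !natz.
lia.
Qed.

Lemma single_sum (r : nat) : (r <= m)%N ->
  \sum_(k < m | (k.*2 < m)%N)
     ((-1) ^+ k * (m%:Z - 2 * k%:Z) *
      (nat_of_bool ((k.*2 <= m)%N && ((r == k) || (r == m - k)%N)))%:Z)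
  = (-1) ^+ r * (m%:Z - 2 * r%:Z).
Proof.
move=> hr; have hmo : odd m := hm.
case: (ltnP r.*2 m) => h2.
  have rm : (r < m)%N by lia.
  rewrite (bigD1 (Ordinal rm)) //= big1 ?addr0.
    by rewrite eqxx orTb andbT (_ : (r.*2 <= m)%N = true) ?mulr1 //; lia.
  move=> k /andP [hk nk].
  have nk' : r != k by apply: contra nk => /eqP e; apply/eqP/val_inj.
  rewrite (negbTE nk') /=.
  have -> : (r == m - k)%N = false by apply/eqP; lia.
  by rewrite andbF mulr0.
have m2 : (m < r.*2)%N.
  rewrite ltn_neqAle h2 andbT; apply/negP => /eqP e.
  by move: hmo; rewrite e odd_double.
have rm : (m - r < m)%N by lia.
rewrite (bigD1 (Ordinal rm)) /=; last by lia.
rewrite big1 ?addr0.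
  have -> : (r == m - (m - r))%N by apply/eqP; lia.
  rewrite orbT andbT (_ : ((m - r).*2 <= m)%N = true) ?mulr1; last by lia.
  have e1 : (-1) ^+ (m - r) = - (-1) ^+ r :> int.
    rewrite -signr_odd oddB // hmo -[in RHS]signr_odd.
    by case: (odd r); rewrite /= ?expr1 ?expr0 ?opprK.
  have e2 : (m%:Z - 2 * (m - r)%N%:Z) = - (m%:Z - 2 * r%:Z) by lia.
  by rewrite e1 e2 mulrNN.
move=> k /andP [hk nk].
have nk' : (r == m - k)%N = false.
  apply/negP => /eqP e; move/negP: nk; apply; apply/eqP/val_inj => /=; lia.
rewrite nk' orbF.
have -> : (r == k) = false by apply/eqP; lia.
by rewrite andbF mulr0.
Qed.

Lemma rs_pm L i : rs L i = 1 \/ rs L i = -1.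
Proof. exact: osign_pm. Qed.
Lemma cs_pm L i : cs L i = 1 \/ cs L i = -1.
Proof. exact: osign_pm. Qed.

Lemma factor_row L : (-1) ^+ n_odd_rows L * (m%:Z - 2 * (n_odd_rows L)%:Z)
   = (\prod_i rs L i) * (\sum_i rs L i).
Proof. by rewrite prod_pm ?sum_pm //; apply: rs_pm. Qed.

Lemma factor_col L : (-1) ^+ n_odd_cols L * (m%:Z - 2 * (n_odd_cols L)%:Z)
   = (\prod_i cs L i) * (\sum_i cs L i).
Proof. by rewrite prod_pm ?sum_pm //; apply: cs_pm. Qed.

Lemma weighted_L L :
  \sum_(k < m | (k.*2 < m)%N) \sum_(j < m | (j.*2 < m)%N)
    ((-1) ^+ (k + j) * (m%:Z - 2 * k%:Z) * (m%:Z - 2 * j%:Z) *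
       (nat_of_bool (parity_type L k j))%:Z) = W L.
Proof.
have hr : (n_odd_rows L <= m)%N by rewrite /n_odd_rows; apply: (leq_trans (max_card _)); rewrite card_ord.
have hc : (n_odd_cols L <= m)%N by rewrite /n_odd_cols; apply: (leq_trans (max_card _)); rewrite card_ord.
rewrite /W parE.
have -> : forall a b c d : int, a * b * c * d = (a * c) * (b * d) by move=> a b c d; ring.
rewrite -factor_row -factor_col.
rewrite -(single_sum hr) -(single_sum hc) mulr_suml; apply: eq_bigr => k _.
rewrite mulr_sumr; apply: eq_bigr => j _.
rewrite /parity_type exprD.
case: (k.*2 <= m)%N; case: (j.*2 <= m)%N; case: (_ || _); case: (_ || _);
  rewrite /= ?mulr0 ?mul0r ?mulr1; ring.
Qed.

Lemma card_sumZ (Q : pred (array m)) :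
  (#|[set L : array m | latin L && reduced L && Q L]|)%:Z =
  \sum_(L : array m | latin L && reduced L) (nat_of_bool (Q L))%:Z.
Proof.
rewrite -natz -sum1_card natr_sum.
rewrite (eq_bigl (fun L => (latin L && reduced L) && Q L)); last by move=> L; rewrite inE.
rewrite big_mkcondr; apply: eq_bigr => L _; by case: (Q L).
Qed.

Lemma par_pm L : par L = 1 \/ par L = -1.
Proof.
rewrite parE !prod_pm; try by [apply: rs_pm | apply: cs_pm].
rewrite -exprD -signr_odd; case: (odd _); [right|left]; by rewrite ?expr1 ?expr0.
Qed.

Lemma diffE : (#|RELS m|%:Z - #|ROLS m|%:Z) =
   \sum_(L : array m | latin L && reduced L) par L.
Proof.
rewrite /RELS /ROLS (card_sumZ (fun L => par L == 1)) (card_sumZ (fun L => par L == -1)).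
rewrite -sumrB; apply: eq_bigr => L _.
by case: (par_pm L) => ->.
Qed.

Lemma weighted_eq :
  \sum_(k < m | (k.*2 < m)%N) \sum_(j < m | (j.*2 < m)%N)
     ((-1) ^+ (k + j) * (m%:Z - 2 * k%:Z) * (m%:Z - 2 * j%:Z) * (N m k j)%:Z : int)
  = (m * m)%:R * (#|RELS m|%:Z - #|ROLS m|%:Z).
Proof.
rewrite diffE -key.
under eq_bigr => k _ do under eq_bigr => j _ do
  rewrite /N (card_sumZ (fun L => parity_type L k j)) mulr_sumr.
under eq_bigr => k _ do rewrite exchange_big.
rewrite exchange_big; apply: eq_bigr => L _.
by rewrite weighted_L.
Qed.
End S.

Unset Implicit Arguments.

Theorem proposition3p3 (n : nat) (hn : odd n) :
  #|RELS n| <> #|ROLS n| <->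
  \sum_(k < n | (k.*2 < n)%N) \sum_(m < n | (m.*2 < n)%N)
     ((-1) ^+ (k + m) * (n%:Z - 2 * k%:Z) * (n%:Z - 2 * m%:Z) * (N n k m)%:Z : int)
  <> 0.
Proof.
case: n hn => [//|n] hn.
rewrite (weighted_eq hn).
have hm0 : ((n.+1 * n.+1)%:R : int) != 0 by rewrite pnatr_eq0.
split.
  move=> hne /eqP; rewrite mulf_eq0 (negbTE hm0) /= subr_eq0 => /eqP [e].
  exact: hne.
by move=> hne e; apply: hne; rewrite e subrr mulr0.
Qed.
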